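(* Let $m\ge3$, $C$ a set of $m$ candidates, $T$ the set of all $m!$ strict rankings of $C$, $w=(w_1,\dots,w_m)$ with $1=w_1\ge\cdots\ge w_m=0$, and $\sigma_t(\alpha)=w_i$ where $i$ is the position of $\alpha$ in $t\in T$. Let $(N_t)_{t\in T}$ be nonnegative integers (numbers of voters of each type) and $|\alpha|=\sum_tN_t\sigma_t(\alpha)$. Suppose candidate $a$ satisfies $|a|>|\alpha|$ for all $\alpha\ne a$, and let $b$ be a candidate with the second-highest score, i.e. $|b|\ge|\alpha|$ for all $\alpha\ne a$. For $\beta\ne a$ let $Q_3(\beta)$ be the optimal value (or $+\infty$ if infeasible) of the linear program: minimize $\sum_{t\in\bar T_{\beta a}}x_t$ over real $x_t$ ($t\in\bar T_{\beta a}$), $y_t$ ($t\in T_\beta$) subject to $$\sum_{t\in T_\beta}y_t(1-\sigma_t(\alpha))-\sum_{t\in\bar T_{\beta a}}x_t(\sigma_t(\beta)-\sigma_t(\alpha))\ge|\alpha|-|\beta|\quad\forall\alpha\ne\beta,$$ $\sum_{t\in T_\beta}y_t=\sum_{t\in\bar T_{\beta a}}x_t$, $x_t\ge0$, $y_t\ge0$, where $\bar T_{\beta a}$ is the set of types ranking $\beta$ above $a$ and $T_\beta$ the set of types ranking $\beta$ first. Then $\min_{\beta\ne a}Q_3(\beta)=Q_3(b)$. *)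

(* Defs.v *)
From HB Require Import structures.
From mathcomp Require Import all_boot all_order all_algebra all_fingroup.
From mathcomp Require Import all_classical all_reals.
From mathcomp Require Import constructive_ereal ereal.
Set Implicit Arguments. Unset Strict Implicit. Unset Printing Implicit Defensive.
Import Order.TTheory GRing.Theory Num.Theory.
Local Open Scope ring_scope.

(* Candidates are 'I_m; a type (strict ranking) t : {perm 'I_m} sends a
   candidate to its position (0 = first).  Weights w : nat -> R, position i
   (0-indexed) gets weight w i. *)

Definition sigma (R : realType) (m : nat) (w : nat -> R)
  (t : {perm 'I_m}) (al : 'I_m) : R := w (t al).

Definition score (R : realType) (m : nat) (w : nat -> R)
  (N : {perm 'I_m} -> nat) (al : 'I_m) : R :=
  \sum_(t : {perm 'I_m}) (N t)%:R * sigma w t al.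

Definition Tbar (m : nat) (be a : 'I_m) : pred {perm 'I_m} :=
  fun t => (t be < t a)%N.
Definition Tfirst (m : nat) (be : 'I_m) : pred {perm 'I_m} :=
  fun t => (t be == 0 :> nat).

(* Feasibility of (x,y) for the linear program defining Q_3(beta).
   Only x_t for t in Tbar and y_t for t in Tfirst are variables; other
   coordinates are ignored. *)
Definition Q3_feasible (R : realType) (m : nat) (w : nat -> R)
  (N : {perm 'I_m} -> nat) (a be : 'I_m)
  (x y : {perm 'I_m} -> R) : Prop :=
  [/\ forall al : 'I_m, al != be ->
        \sum_(t | Tfirst be t) y t * (1 - sigma w t al)
        - \sum_(t | Tbar be a t) x t * (sigma w t be - sigma w t al)
        >= score w N al - score w N be,
      \sum_(t | Tfirst be t) y t = \sum_(t | Tbar be a t) x t,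
      forall t, Tbar be a t -> 0 <= x t &
      forall t, Tfirst be t -> 0 <= y t].

Definition Q3 (R : realType) (m : nat) (w : nat -> R)
  (N : {perm 'I_m} -> nat) (a be : 'I_m) : \bar R :=
  ereal_inf [set ((\sum_(t | Tbar be a t) x t)%:E) | x in
     [set x | exists y, Q3_feasible w N a be x y]]%classic.

(* Main.v *)
Require Import Defs.
From HB Require Import structures.
From mathcomp Require Import all_boot all_order all_algebra all_fingroup.
From mathcomp Require Import all_classical all_reals.
From mathcomp Require Import constructive_ereal ereal.
From mathcomp Require Import lra.
Import Order.TTheory GRing.Theory Num.Theory.
Local Open Scope ring_scope.

Section Aux.
Variables (R : realType) (m : nat) (be b : 'I_m).
Let tau : {perm 'I_m} := tperm be b.

Lemma reidx (P : pred {perm 'I_m}) (F : {perm 'I_m} -> R) :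
  \sum_(t | P t) F (tau * t)%g = \sum_(s | P (tau * s)%g) F s.
Proof.
rewrite (reindex_inj (inv_inj (tpermKg be b))) /=.
by apply: eq_bigr => s _; rewrite tpermKg.
Qed.
End Aux.

Lemma Q3_le (R : realType) (m : nat) (w : nat -> R)
  (N : {perm 'I_m} -> nat) (a b be : 'I_m)
  (hba : b != a) (hbea : be != a)
  (hbb : score w N be <= score w N b) :
  (Q3 w N a b <= Q3 w N a be)%E.
Proof.
apply: le_ereal_inf => _ [x [y [H1 H2 H3 H4]] <-].
pose tau : {perm 'I_m} := tperm be b.
have ta : tau a = a by rewrite tpermD // eq_sym.
have tb : tau b = be by rewrite tpermR.
have PB : forall s, Tbar b a (tau * s)%g = Tbar be a s.
  by move=> s; rewrite /Tbar !permM ta tb.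
have PF : forall s, Tfirst b (tau * s)%g = Tfirst be s.
  by move=> s; rewrite /Tfirst !permM tb.
exists (fun t => x (tau * t)%g).
  exists (fun t => y (tau * t)%g); split.
  - move=> al hal.
    have -> : \sum_(t | Tfirst b t) y (tau * t)%g * (1 - sigma w t al)
        = \sum_(s | Tfirst be s) y s * (1 - sigma w s (tau al)).
      rewrite -(eq_bigl _ _ PF) -(@reidx R m be b (Tfirst b)).
      by apply: eq_bigr => t _; rewrite /sigma permM tpermK.
    have -> : \sum_(t | Tbar b a t) x (tau * t)%g * (sigma w t b - sigma w t al)
        = \sum_(s | Tbar be a s) x s * (sigma w s be - sigma w s (tau al)).
      rewrite -(eq_bigl _ _ PB) -(@reidx R m be b (Tbar b a)).
      by apply: eq_bigr => t _; rewrite /sigma !permM tpermK tpermL.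
    have hne : tau al != be.
      apply: contra hal => /eqP h; apply/eqP.
      by rewrite -(tpermK be b al) -/tau h tpermL.
    apply: le_trans (H1 _ hne).
    rewrite /tau; case: (tpermP be b al) => [->|hab|_ _].
    + have := hbb; lra.
    + by rewrite hab eqxx in hal.
    + have := hbb; lra.
  - by rewrite (@reidx R m be b) (@reidx R m be b) (eq_bigl _ _ PF) (eq_bigl _ _ PB).
  - by move=> t ht; apply: H3; rewrite -PB /tau tpermKg.
  - by move=> t ht; apply: H4; rewrite -PF /tau tpermKg.
- by rewrite (@reidx R m be b) (eq_bigl _ _ PB).
Qed.
Theorem proposition7 (R : realType) (m : nat) (hm : (3 <= m)%N)
  (w : nat -> R)
  (hw1 : w 0%N = 1) (hwm : w m.-1 = 0)
  (hwdec : forall i j : nat, (i <= j)%N -> (j < m)%N -> w j <= w i)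
  (N : {perm 'I_m} -> nat) (a b : 'I_m)
  (ha : forall al : 'I_m, al != a -> score w N al < score w N a)
  (hba : b != a)
  (hb : forall al : 'I_m, al != a -> score w N al <= score w N b) :
  (\big[Order.min/+oo%E]_(be : 'I_m | be != a) Q3 w N a be = Q3 w N a b)%E.
Proof.
rewrite (bigD1 b) //=.
apply: min_l.
apply: (big_ind (fun v => (Q3 w N a b <= v)%E)) => //.
- by rewrite leey.
- by move=> u v hu hv; rewrite le_min hu hv.
- by move=> i /andP [hia _]; apply: Q3_le => //; apply: hb.
Qed.
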